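(* Let $F$ be a nondyadic nonarchimedean local field (so $2$ is a unit in its ring of integers $R$). Then for every positive integer $n$, $u^\ast_R(n) = 2n$; that is, the minimal rank of a primitively $n$-universal $R$-lattice is exactly $2n$.
   Context: $F$ is a nonarchimedean local field of characteristic not $2$ with ring of integers $R$. An $R$-lattice is a finitely generated $R$-submodule $L$ of a quadratic space $(V,B)$ over $F$, with $Q(v)=B(v,v)$; all lattices are assumed integral ($B(L,L)\subseteq R$) and nondegenerate (Gram matrix nonsingular). A representation of $L$ into $M$ is an $R$-linear map $\sigma:L\to M$ with $B(\sigma v,\sigma v')=B(v,v')$; it is primitive if $\sigma(L)$ is a direct summand of $M$. An $R$-lattice is primitively $n$-universal if it primitively represents every (integral, nondegenerate) $R$-lattice of rank $n$. $u^\ast_R(n)$ denotes the minimal rank of a primitively $n$-universal $R$-lattice. *)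

(* Defs.v *)
From HB Require Import structures.
From mathcomp Require Import all_boot all_order all_algebra.
Set Implicit Arguments. Unset Strict Implicit. Unset Printing Implicit Defensive.
Import Order.TTheory GRing.Theory Num.Theory.
Local Open Scope ring_scope.

Section LocalField.
Variable F : fieldType.
Variable R : pred F.

Definition is_subring : Prop :=
  [/\ R 0, R 1, (forall x y, R x -> R y -> R (x - y))
    & (forall x y, R x -> R y -> R (x * y))].

Definition unitR (u : F) : Prop := [/\ R u, u != 0 & R u^-1].

Definition pi_cauchy (pi : F) (a : nat -> F) : Prop :=
  forall k : nat, exists N : nat, forall m n : nat, (N <= m)%N -> (N <= n)%N ->
    R ((a m - a n) / pi ^+ k).

Definition pi_converges (pi : F) (a : nat -> F) (x : F) : Prop :=
  forall k : nat, exists N : nat, forall n : nat, (N <= n)%N ->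
    R ((a n - x) / pi ^+ k).

(* F is a nonarchimedean local field whose ring of integers is R:
   R is a discrete valuation ring of F (with uniformizer pi),
   with finite residue field R / pi R, and F is complete for the
   pi-adic (= valuation) topology. *)
Definition nonarch_local_field_with_integers : Prop :=
  is_subring /\
  exists pi : F,
  [/\ R pi, pi != 0, ~ R pi^-1 &
      (forall x : F, x != 0 -> R x \/ R x^-1)] /\
  [/\
      (forall x : F, R x -> x != 0 ->
          exists (k : nat) (u : F), unitR u /\ x = pi ^+ k * u),
      (exists s : seq F, all R s /\
          forall x, R x -> exists2 y, y \in s & R ((x - y) / pi))
    & (forall a : nat -> F, pi_cauchy pi a -> exists x, pi_converges pi a x)].

Definition nondyadic : Prop := unitR 2.

(* An integral nondegenerate R-lattice of rank n, given (up to isometry) by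
   its Gram matrix in an R-basis: symmetric, entries in R, nonsingular. *)
Definition int_lattice (n : nat) (G : 'M[F]_n) : Prop :=
  [/\ G^T = G, (forall i j, R (G i j)) & \det G != 0].

Definition Rvec (m : nat) (v : 'rV[F]_m) : Prop := forall j, R (v 0 j).

(* X : rows are the images of the basis of L in the basis of M (R-coordinates);
   X represents L (Gram G) into M (Gram H). *)
Definition represents (n m : nat) (X : 'M[F]_(n, m)) (G : 'M[F]_n) (H : 'M[F]_m)
  : Prop := (forall i j, R (X i j)) /\ X *m H *m X^T = G.

Definition imageR (n m : nat) (X : 'M[F]_(n, m)) (v : 'rV[F]_m) : Prop :=
  exists c : 'rV[F]_n, Rvec c /\ v = c *m X.

Definition direct_summand (m : nat) (S : 'rV[F]_m -> Prop) : Prop :=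
  exists N : 'rV[F]_m -> Prop,
  [/\ (forall v, N v -> Rvec v), N 0,
      (forall v w, N v -> N w -> N (v + w)) &
      (forall a v, R a -> N v -> N (a *: v))] /\
  (forall v, Rvec v -> exists a b, [/\ S a, N b & v = a + b]) /\
  (forall v, S v -> N v -> v = 0).

Definition prim_represents (n m : nat) (G : 'M[F]_n) (H : 'M[F]_m) : Prop :=
  exists X : 'M[F]_(n, m), represents X G H /\ direct_summand (imageR X).

Definition prim_n_universal (n m : nat) (H : 'M[F]_m) : Prop :=
  int_lattice H /\
  forall G : 'M[F]_n, int_lattice G -> prim_represents G H.

Definition ustar_is (n k : nat) : Prop :=
  (exists H : 'M[F]_k, prim_n_universal n H) /\
  (forall (m : nat) (H : 'M[F]_m), prim_n_universal n H -> (k <= m)%N).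

End LocalField.

(* Main.v *)
Require Import Defs.
From mathcomp Require Import all_boot all_order all_algebra.
From mathcomp Require Import ring zify.
Set Implicit Arguments. Unset Strict Implicit. Unset Printing Implicit Defensive.
Import Order.TTheory GRing.Theory Num.Theory.
Local Open Scope ring_scope.

Section Helpers.
Variable F : fieldType.
Variable R : pred F.
Hypothesis Hsub : is_subring R.

Lemma R0 : R 0. Proof. by case: Hsub. Qed.
Lemma R1 : R 1. Proof. by case: Hsub. Qed.
Lemma RB x y : R x -> R y -> R (x - y). Proof. by case: Hsub => _ _ h _; apply: h. Qed.
Lemma RM x y : R x -> R y -> R (x * y). Proof. by case: Hsub => _ _ _ h; apply: h. Qed.
Lemma RN x : R x -> R (- x). Proof. by move=> h; rewrite -sub0r; apply: RB => //; apply: R0. Qed.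
Lemma RD x y : R x -> R y -> R (x + y).
Proof. by move=> hx hy; rewrite -[y]opprK; apply: RB => //; apply: RN. Qed.
Lemma Rsum (I : Type) (r : seq I) (P : pred I) (f : I -> F) :
  (forall i, P i -> R (f i)) -> R (\sum_(i <- r | P i) f i).
Proof. move=> h; apply: (big_ind (fun x => R x)) => //; [exact: R0|exact: RD]. Qed.
Lemma Rprod (I : Type) (r : seq I) (P : pred I) (f : I -> F) :
  (forall i, P i -> R (f i)) -> R (\prod_(i <- r | P i) f i).
Proof. move=> h; apply: (big_ind (fun x => R x)) => //; [exact: R1|exact: RM]. Qed.
Lemma RX x k : R x -> R (x ^+ k).
Proof. move=> h; elim: k => [|k IH]; [exact: R1| rewrite exprS; exact: RM]. Qed.
Lemma Rnat b : R (1 *+ b). 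
Proof. elim: b => [|b IH]; [exact: R0| rewrite mulrS; apply: RD => //; exact: R1]. Qed.

Definition Rmx m n (A : 'M[F]_(m, n)) := forall i j, R (A i j).

Lemma Rvec_mx m (v : 'rV[F]_m) : Rvec R v <-> Rmx v.
Proof. split=> h i //; move=> j; by rewrite (ord1 i). Qed.

Lemma Rmx_mul m n p (A : 'M[F]_(m, n)) (B : 'M[F]_(n, p)) : Rmx A -> Rmx B -> Rmx (A *m B).
Proof. move=> hA hB i j; rewrite mxE; apply: Rsum => k _; exact: RM. Qed.
Lemma Rmx_add m n (A B : 'M[F]_(m, n)) : Rmx A -> Rmx B -> Rmx (A + B).
Proof. move=> hA hB i j; rewrite mxE; exact: RD. Qed.
Lemma Rmx_sub m n (A B : 'M[F]_(m, n)) : Rmx A -> Rmx B -> Rmx (A - B).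
Proof. move=> hA hB i j; rewrite !mxE; exact: RB. Qed.
Lemma Rmx_scale m n a (A : 'M[F]_(m, n)) : R a -> Rmx A -> Rmx (a *: A).
Proof. move=> ha hA i j; rewrite mxE; exact: RM. Qed.
Lemma Rmx_tr m n (A : 'M[F]_(m, n)) : Rmx A -> Rmx A^T.
Proof. by move=> hA i j; rewrite mxE. Qed.
Lemma Rmx_scalar n a : R a -> Rmx (a%:M : 'M[F]_n).
Proof. move=> ha i j; rewrite mxE; case: (i == j) => /=; [by rewrite mulr1n | exact: R0]. Qed.
Lemma Rmx0 m n : Rmx (0 : 'M[F]_(m, n)).
Proof. move=> i j; rewrite mxE; exact: R0. Qed.
Lemma Rmx_delta m n (i0 : 'I_m) (j0 : 'I_n) : Rmx (delta_mx i0 j0 : 'M[F]_(m, n)).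
Proof. move=> i j; rewrite mxE; exact: Rnat. Qed.
Lemma Rmx_row m n1 n2 (A : 'M[F]_(m, n1)) (B : 'M[F]_(m, n2)) : Rmx A -> Rmx B -> Rmx (row_mx A B).
Proof. move=> hA hB i j; rewrite -(splitK j); case: (split j) => k /=; by rewrite ?row_mxEl ?row_mxEr. Qed.
Lemma Rmx_col m1 m2 n (A : 'M[F]_(m1, n)) (B : 'M[F]_(m2, n)) : Rmx A -> Rmx B -> Rmx (col_mx A B).
Proof. move=> hA hB i j; rewrite -(splitK i); case: (split i) => k /=; by rewrite ?col_mxEu ?col_mxEd. Qed.
Lemma Rdet n (A : 'M[F]_n) : Rmx A -> R (\det A).
Proof.
move=> hA; rewrite /determinant; apply: Rsum => s _; apply: RM.
  apply: RX; apply: RN; exact: R1.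
by apply: Rprod => i _; apply: hA.
Qed.
Lemma Rmx_adj n (A : 'M[F]_n) : Rmx A -> Rmx (\adj A).
Proof.
move=> hA i j; rewrite mxE /cofactor; apply: RM; first by apply: RX; apply: RN; exact: R1.
by apply: Rdet => a b; rewrite !mxE.
Qed.

Hypothesis Hval : forall x : F, x != 0 -> R x \/ R x^-1.

Lemma seq_max (s : seq F) : has (fun x => x != 0) s ->
  exists2 z, z \in s & z != 0 /\ forall x, x \in s -> R (x / z).
Proof.
elim: s => [//|x s IH] /=.
case Hs: (has (fun x => x != 0) s) => Hx.
  have [z zs [z0 hz]] := IH Hs.
  case x0: (x == 0).
    exists z; first by rewrite inE zs orbT.
    split=> // w; rewrite inE => /orP [/eqP ->|]; last exact: hz.
    by rewrite (eqP x0) mul0r; exact: R0.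
  have xz0 : x / z != 0 by rewrite mulf_neq0 ?invr_eq0 ?x0.
  case: (Hval xz0) => hxz.
    exists z; first by rewrite inE zs orbT.
    split=> // w; rewrite inE => /orP [/eqP ->|]; [exact: hxz|exact: hz].
  exists x; first by rewrite inE eqxx.
  split; first by rewrite x0.
  move=> w; rewrite inE => /orP [/eqP ->|ws].
    by rewrite divff ?x0 //; exact: R1.
  have -> : w / x = (w / z) * (x / z)^-1 by rewrite invf_div mulrA mulrVK // unitfE.
  by apply: RM => //; apply: hz.
have x0 : x != 0 by move: Hx; rewrite orbF.
exists x; first by rewrite inE eqxx.
split=> // w; rewrite inE => /orP [/eqP ->|ws].
  by rewrite divff //; exact: R1.
have : ~~ (w != 0) by apply: contraFN Hs => h; apply/hasP; exists w.
by rewrite negbK => /eqP ->; rewrite mul0r; exact: R0.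
Qed.

Lemma vec_norm n (y : 'rV[F]_n) : y != 0 ->
  exists j, y 0 j != 0 /\ forall i, R (y 0 i / y 0 j).
Proof.
move=> y0.
have hs : has (fun x => x != 0) [seq y 0 i | i <- enum 'I_n].
  apply: contraR y0 => /hasPn h; apply/eqP/matrixP => i j.
  rewrite (ord1 i) mxE; apply/eqP; apply: negbNE; apply: h.
  by apply: map_f; rewrite mem_enum.
have [z /mapP [j _ ->] [z0 hz]] := seq_max hs.
exists j; split=> // i; apply: hz; apply: map_f; by rewrite mem_enum.
Qed.
End Helpers.

Lemma lower_bound (F : fieldType) (R : pred F) (pi : F) :
  is_subring R -> R pi -> pi != 0 -> ~ R pi^-1 ->
  (forall x : F, x != 0 -> R x \/ R x^-1) ->
  (forall x : F, R x -> x != 0 -> exists (k : nat) (u : F), unitR R u /\ x = pi ^+ k * u) ->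
  forall n m (H : 'M[F]_m), prim_n_universal R n H -> (n + n <= m)%N.
Proof.
move=> Hsub Rpi pi0 npi Hval Hfac n m H [[_ RH dH] Huniv].
rewrite leqNgt; apply/negP => ltm.
have RdH : R (\det H) by apply: Rdet.
have [j [u [[Ru u0 Rui] detHE]]] := Hfac _ RdH dH.
pose k := j.+1.
pose G : 'M[F]_n := (pi ^+ k)%:M.
have pik0 : pi ^+ k != 0 by rewrite expf_neq0.
have GL : int_lattice R G.
  split; first by rewrite tr_scalar_mx.
    by apply: Rmx_scalar => //; apply: RX.
  by rewrite det_scalar expf_neq0.
have [X [[RX XHX] [N [[NR N0 ND NZ] [Ndec Nint]]]]] := Huniv G GL.
have : forall l : 'I_m, exists cb : 'rV[F]_n * 'rV[F]_m,
    [/\ Rvec R cb.1, N cb.2 & delta_mx 0 l = cb.1 *m X + cb.2].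
  move=> l.
  have Rl : Rvec R (delta_mx 0 l : 'rV[F]_m) by apply/Rvec_mx => //; apply: Rmx_delta.
  have [a [b [[c [Rc ->]] Nb E]]] := Ndec _ Rl.
  by exists (c, b).
case/fin_all_exists => cb Hcb.
pose C : 'M[F]_(m, n) := \matrix_l (cb l).1.
pose B : 'M[F]_m := \matrix_l (cb l).2.
have IE : 1%:M = C *m X + B.
  apply/row_matrixP => l; rewrite row1 linearD /= row_mul !rowK.
  by case: (Hcb l).
have RC : Rmx R C.
  move=> l i; rewrite mxE; case: (Hcb l) => h _ _; exact: h.
have RXm : Rmx R X by move=> a b; apply: RX.
have NrB : forall r : 'rV[F]_m, Rvec R r -> N (r *m B).
  move=> r Rr; rewrite mulmx_sum_row; apply: (big_ind N) => // l _.
  apply: NZ; first exact: Rr.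
  by rewrite rowK; case: (Hcb l).
have decomp : forall r : 'rV[F]_m, r = r *m C *m X + r *m B.
  by move=> r; rewrite -mulmxA -mulmxDr -IE mulmx1.
have SB0 : forall d : 'rV[F]_n, Rvec R d -> d *m X *m B = 0.
  move=> d Rd; apply: Nint.
    exists (d - d *m X *m C); split.
      have Rd' : Rmx R d by apply/Rvec_mx.
      by apply/Rvec_mx; apply: Rmx_sub => //; apply: Rmx_mul => //; apply: Rmx_mul.
    by rewrite mulmxBl {2}(decomp (d *m X)) addrC addKr.
  have Rd' : Rmx R d by apply/Rvec_mx.
  by apply: NrB; apply/Rvec_mx; apply: Rmx_mul.
have XB0 : X *m B = 0.
  apply/row_matrixP => i; rewrite row_mul row0 rowE; apply: SB0.
  by apply/Rvec_mx => //; apply: Rmx_delta.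
have Xinj : forall z : 'rV[F]_n, z *m X = 0 -> z = 0.
  move=> z zX.
  have : z *m (X *m H *m X^T) = 0 by rewrite !mulmxA zX !mul0mx.
  rewrite XHX /G mul_mx_scalar => /eqP; rewrite scalemx_eq0 (negbTE pik0) /=.
  by move/eqP.
have rX : (n <= \rank X)%N.
  have := mxrankM_maxl X (H *m X^T).
  by rewrite mulmxA XHX /G -scalemx1 mxrank_scale_nz // mxrank1.
have rB : (\rank B < n)%N.
  have := mxrank_mul_min X B; rewrite XB0 mxrank0.
  have := rank_leq_row B. lia.
pose M' := X *m H *m B^T.
have rM : (\rank M' < n)%N.
  apply: leq_ltn_trans rB; rewrite -(mxrank_tr B); exact: mxrankM_maxr.
pose K := kermx M'.
have K0 : K != 0.
  by rewrite -mxrank_eq0 mxrank_ker subn_eq0 -ltnNge.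
have [i0 Hi0] : exists i, row i K != 0.
  case: (pickP (fun i => row i K != 0)) => [i Hi|H0]; first by exists i.
  case/negP: K0; apply/eqP/row_matrixP => i; move: (H0 i) => /negbFE/eqP ->.
  by rewrite row0.
pose y0 := row i0 K.
have y0M : y0 *m M' = 0 by rewrite /y0 -row_mul mulmx_ker row0.
have [jj [yj0 Ryj]] := vec_norm Hsub Hval Hi0.
pose y := (y0 0 jj)^-1 *: y0.
have Ry : Rmx R y by move=> a b; rewrite (ord1 a) mxE mulrC; apply: Ryj.
have yjj : y 0 jj = 1 by rewrite mxE mulVf.
have yM : y *m M' = 0 by rewrite -scalemxAl y0M scaler0.
pose v := y *m X.
have IT : 1%:M = X^T *m C^T + B^T by rewrite -trmx_mul -raddfD /= -IE trmx1.
have vH : v *m H = pi ^+ k *: (y *m C^T).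
  rewrite -[v *m H]mulmx1 IT mulmxDr /v.
  have -> : y *m X *m H *m (X^T *m C^T) = y *m (X *m H *m X^T) *m C^T by rewrite !mulmxA.
  have -> : y *m X *m H *m B^T = y *m M' by rewrite /M' !mulmxA.
  by rewrite yM addr0 XHX /G mul_mx_scalar scalemxAl.
pose w := u^-1 *: (y *m C^T *m \adj H).
have Rw : Rmx R w.
  apply: Rmx_scale => //; apply: Rmx_mul => //; last exact: Rmx_adj.
  by apply: Rmx_mul => //; apply: Rmx_tr.
have vE : v = pi *: w.
  have h1 : \det H *: v = pi ^+ k *: (y *m C^T *m \adj H).
    by rewrite -mul_mx_scalar -mul_mx_adj mulmxA vH -scalemxAl.
  apply: (@scalerI _ _ (\det H)) => //.
  rewrite h1 /w detHE !scalerA exprS.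
  congr (_ *: _); field; exact: u0.
have wB : w *m B = 0.
  have : v *m B = 0 by rewrite /v -mulmxA XB0 mulmx0.
  rewrite vE -scalemxAl => /eqP; rewrite scalemx_eq0 (negbTE pi0) /=.
  by move/eqP.
have yE : y = pi *: (w *m C).
  apply/eqP; rewrite -subr_eq0; apply/eqP; apply: Xinj; have wE : w = w *m C *m X by rewrite {1}(decomp w) wB addr0.
  by rewrite mulmxBl -/v vE {1}wE -!scalemxAl subrr.
have : 1 = pi * (w *m C) 0 jj by rewrite -yjj yE mxE.
move=> h; apply: npi.
have -> : pi^-1 = (w *m C) 0 jj by rewrite -[pi^-1]mulr1 h mulKf.
exact: Rmx_mul.
Qed.

Lemma existence (F : fieldType) (R : pred F) :
  is_subring R -> unitR R 2 ->
  forall n, exists H : 'M[F]_(n + n), prim_n_universal R n H.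
Proof.
move=> Hsub [R2 n20 R2i] n.
pose H : 'M[F]_(n + n) := block_mx 0 1%:M 1%:M 0.
have R1m : Rmx R (1%:M : 'M[F]_n) by apply: Rmx_scalar => //; apply: R1.
exists H; split.
  split.
  - by rewrite /H tr_block_mx !trmx0 trmx1.
  - move=> i j; rewrite /H block_mxEv; apply: Rmx_col => //; apply: Rmx_row => //;
      apply: (Rmx0 Hsub).
  - have HH : H *m H = 1%:M.
      by rewrite /H mulmx_block !mulmx0 !mul0mx !mulmx1 !addr0 !add0r -scalar_mx_block.
    have := congr1 determinant HH; rewrite det_mulmx det1 => h.
    apply/negP => /eqP h0; move: h; rewrite h0 mul0r => h.
    by move: (@oner_neq0 F); rewrite h eqxx.
move=> G [GT RG dG].
pose A : 'M[F]_n := 2^-1 *: G.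
have RA : Rmx R A by apply: Rmx_scale.
pose X : 'M[F]_(n, n + n) := row_mx 1%:M A.
have RX : Rmx R X by apply: Rmx_row.
exists X; split.
  split; first exact: RX.
  rewrite /X /H mul_row_block !mulmx0 !mul1mx !addr0 !add0r tr_row_mx trmx1 mul_row_col.
  rewrite mulmx1 mul1mx /A linearZ /= GT mulmx1 -scalerDl.
  have -> : 2^-1 + 2^-1 = 1 :> F by field.
  by rewrite scale1r.
exists (fun v => Rvec R v /\ lsubmx v = 0).
split.
  split.
  - by move=> v [].
  - by split; [apply/Rvec_mx; apply: Rmx0 | rewrite linear0].
  - move=> v w [Rv lv] [Rw lw]; split; last by rewrite linearD /= lv lw addr0.
    by apply/Rvec_mx; apply: Rmx_add => //; apply/Rvec_mx.
  - move=> a v Ra [Rv lv]; split; last by rewrite linearZ /= lv scaler0.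
    by apply/Rvec_mx; apply: Rmx_scale => //; apply/Rvec_mx.
split.
  move=> v Rv.
  have Rv' : Rmx R v by apply/Rvec_mx.
  have Rl : Rmx R (lsubmx v) by move=> i j; rewrite mxE.
  have lX : forall c : 'rV[F]_n, lsubmx (c *m X) = c.
    by move=> c; rewrite /X mul_mx_row mulmx1 row_mxKl.
  exists (lsubmx v *m X), (v - lsubmx v *m X); split.
  - by exists (lsubmx v); split => //; apply/Rvec_mx.
  - split; first by apply/Rvec_mx; apply: Rmx_sub => //; apply: Rmx_mul.
    by rewrite linearB /= lX subrr.
  - by rewrite addrC subrK.
move=> v [c [Rc ->]] [_ lv].
move: lv; rewrite /X mul_mx_row mulmx1 row_mxKl => ->.
by rewrite mul0mx row_mx0.
Qed.

Theorem mainTheorem1 (F : fieldType) (R : pred F) :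
  nonarch_local_field_with_integers R -> nondyadic R ->
  forall n : nat, (0 < n)%N -> ustar_is R n (2 * n)%N.
Proof.
move=> [Hsub [pi [[Rpi pi0 npi Hval] [Hfac _ _]]]] H2 n _.
rewrite (_ : (2 * n)%N = (n + n)%N); last by rewrite mul2n addnn.
split; first exact: existence.
move=> m H; exact: lower_bound Hsub Rpi pi0 npi Hval Hfac n m H.
Qed.
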